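(* Let $(P,\le,A_1\ldots A_k)$ be a regular poset of width $w$ with node tree $(\mathcal{N},\prec)$. Suppose $\mathcal{F}\subseteq\mathcal{N}$ is ancestor-free and for every node $(X,Y,<)\in\mathcal{F}$ a perfect matching $M(X,Y,<)$ of the bipartite graph $(X,Y,<)$ is fixed. Let $F=\bigcup_{(X,Y,<)\in\mathcal{F}}(X\cup Y)$. Then there is a partition of $(F,\le)$ into $w$ chains such that for every node $(X,Y,<)\in\mathcal{F}$ and every edge $(a<b)$ of $M(X,Y,<)$, the elements $a$ and $b$ lie in the same chain of this partition.
   Context: Let $(P,\le)$ be a finite poset of width $w$. For $A\subseteq P$ let $A{\uparrow}=\{y: x\le y\text{ for some }x\in A\}$, $A{\downarrow}=\{y: y\le x\text{ for some }x\in A\}$. For maximal antichains $A,B$ write $A\sqsubseteq B$ if $A\subseteq B{\downarrow}$, and $A\sqsubset B$ if also $A\ne B$. For disjoint antichains $A\sqsubset B$, $(A,B,<)$ is the bipartite graph with classes $A,B$ and edges $(a<b)$ for $a\in A,b\in B$, $a<b$; it is regular if every edge lies in a perfect matching. A regular poset $(P,\le,A_1\ldots A_k)$: $A_1,\dots,A_k$ are maximum antichains partitioning $P$, $(\{A_1,\dots,A_k\},\sqsubseteq)$ is a linear order with minimum $A_1$ and maximum $A_2$, $a<b$ for all $a\in A_1,b\in A_2$, and for every $t\in[2,k]$ and every $A_p\sqsubset A_s$ consecutive in $(\{A_1,\dots,A_t\},\sqsubseteq)$ the graph $(A_p,A_s,<)$ is regular. A node is a bipartite graph $(X,Y,<)$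 where, for some such consecutive pair $A_p\sqsubset A_s$ (at some stage $t$), $X\subseteq A_p$, $Y\subseteq A_s$ and $X\cup Y$ is the vertex set of a connected component of $(A_p,A_s,<)$; $\mathrm{Int}(X,Y,<)=X{\uparrow}\cap Y{\downarrow}$. Node tree $(\mathcal{N},\prec)$: $\mathcal{N}$ is the set of all nodes; when for $t\ge3$ the antichain $A_t$ is inserted between $A_p\sqsubset A_s$ consecutive at stage $t-1$, each node $M$ of $(A_p,A_t,<)$ or $(A_t,A_s,<)$ is a child of the unique node $N$ of $(A_p,A_s,<)$ with $\mathrm{Int}(M)\subset\mathrm{Int}(N)$; this is a rooted tree with root $(A_1,A_2,<)$. A set $\mathcal{F}\subseteq\mathcal{N}$ is ancestor-free if no node of $\mathcal{F}$ is a descendant of another node of $\mathcal{F}$. *)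

(* Defs.v *)
From mathcomp Require Import all_boot all_order.
From Stdlib Require Import Relations.
Set Implicit Arguments. Unset Strict Implicit. Unset Printing Implicit Defensive.
Import Order.Theory.

Section PosetDefs.
Context {d : Order.disp_t} {T : finPOrderType d}.

Definition antichain (A : {set T}) : bool :=
  [forall x in A, forall y in A, (x != y) ==> ~~ (x <= y)%O].

Definition chain (C : {set T}) : bool :=
  [forall x in C, forall y in C, (x <= y)%O || (y <= x)%O].

Definition max_antichain (w : nat) (A : {set T}) : bool :=
  antichain A && (#|A| == w).

Definition upset (A : {set T}) : {set T} := [set y | [exists x in A, (x <= y)%O]].
Definition downset (A : {set T}) : {set T} := [set y | [exists x in A, (y <= x)%O]].

Definition sqle (A B : {set T}) : bool := A \subset downset B.
Definition sqlt (A B : {set T}) : bool := sqle A B && (A != B).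

Definition perfect_matching (X Y : {set T}) (M : {set T * T}) : bool :=
  [&& [forall e in M, [&& e.1 \in X, e.2 \in Y & (e.1 < e.2)%O]],
      [forall x in X, #|[set e in M | e.1 == x]| == 1] &
      [forall y in Y, #|[set e in M | e.2 == y]| == 1]].

Definition regular_bip (X Y : {set T}) : Prop :=
  forall a b, a \in X -> b \in Y -> (a < b)%O ->
    exists M, perfect_matching X Y M /\ (a, b) \in M.

Definition bip_adj (X Y : {set T}) : rel T :=
  fun x y => ((x \in X) && (y \in Y) && (x < y)%O) || ((y \in X) && (x \in Y) && (y < x)%O).

Definition component (X Y S : {set T}) : Prop :=
  exists2 x, x \in X :|: Y & S = [set y | connect (bip_adj X Y) x y].

Definition consecutive (A : nat -> {set T}) (t p s : nat) : Prop :=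
  [/\ 1 <= p <= t, 1 <= s <= t, sqlt (A p) (A s) &
      forall q, 1 <= q <= t -> ~~ (sqlt (A p) (A q) && sqlt (A q) (A s))].

Definition regular_poset (w k : nat) (A : nat -> {set T}) : Prop :=
  2 <= k /\
  (forall i, 1 <= i <= k -> max_antichain w (A i)) /\
  (forall i j, 1 <= i <= k -> 1 <= j <= k -> i != j -> [disjoint A i & A j]) /\
  (forall x : T, exists2 i, 1 <= i <= k & x \in A i) /\
  (forall i j, 1 <= i <= k -> 1 <= j <= k -> sqle (A i) (A j) || sqle (A j) (A i)) /\
  (forall i, 1 <= i <= k -> sqle (A 1) (A i) && sqle (A i) (A 2)) /\
  (forall a b, a \in A 1 -> b \in A 2 -> (a < b)%O) /\
  (forall t p s, 2 <= t <= k -> consecutive A t p s -> regular_bip (A p) (A s)).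

(* A node (X,Y,<) is encoded by the pair (X,Y). *)
Definition node_of (A : nat -> {set T}) (p s : nat) (N : {set T} * {set T}) : Prop :=
  [/\ N.1 \subset A p, N.2 \subset A s & component (A p) (A s) (N.1 :|: N.2)].

Definition is_node (A : nat -> {set T}) (k : nat) (N : {set T} * {set T}) : Prop :=
  exists t p s, 2 <= t <= k /\ consecutive A t p s /\ node_of A p s N.

Definition Int (N : {set T} * {set T}) : {set T} := upset N.1 :&: downset N.2.

Definition child (A : nat -> {set T}) (k : nat) (N M : {set T} * {set T}) : Prop :=
  exists t p s, [/\ 3 <= t <= k, consecutive A t.-1 p s,
    sqlt (A p) (A t) && sqlt (A t) (A s),
    node_of A p t M \/ node_of A t s M &
    node_of A p s N /\ Int M \proper Int N].

Definition descendant (A : nat -> {set T}) (k : nat) (M N : {set T} * {set T}) : Prop :=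
  clos_trans _ (child A k) N M.

Definition ancestor_free (A : nat -> {set T}) (k : nat)
  (F : {set {set T} * {set T}}) : Prop :=
  forall M N, M \in F -> N \in F -> ~ descendant A k M N.

End PosetDefs.

Definition width {d} (T : finPOrderType d) : nat :=
  \max_(A : {set T} | antichain A) #|A|.

(* Main.v *)
Require Import Defs.
From mathcomp Require Import all_boot all_order zify.
From Stdlib Require Import Relations ClassicalEpsilon Classical.
Import Order.Theory.
Set Implicit Arguments. Unset Strict Implicit. Unset Printing Implicit Defensive.
Set Default Proof Using "All".

Section Main.
Variables (d : Order.disp_t) (T : finPOrderType d) (w k : nat) (A : nat -> {set T}).
Hypothesis hwidth : width T = w.
Hypothesis hreg : regular_poset w k A.
Hypothesis wpos : 0 < w.

Local Notation I i := (1 <= i <= k).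
Definition lt i j := sqlt (A i) (A j).
Definition le i j := i = j \/ lt i j.

Lemma k2 : 2 <= k. Proof. by case: hreg. Qed.
Lemma I1 : I 1. Proof. by have := k2; lia. Qed.
Lemma I2 : I 2. Proof. by have := k2; lia. Qed.

Lemma hmax i : I i -> antichain (A i) /\ #|A i| = w.
Proof. case: hreg => _ [h _] Hi; by case/andP: (h i Hi) => -> /eqP. Qed.

Lemma hdisj i j : I i -> I j -> i != j -> [disjoint A i & A j].
Proof. case: hreg => _ [_ [h _]]; exact: h. Qed.

Lemma hcover x : exists2 i, I i & x \in A i.
Proof. case: hreg => _ [_ [_ [h _]]]; exact: h. Qed.

Lemma htot i j : I i -> I j -> sqle (A i) (A j) || sqle (A j) (A i).
Proof. case: hreg => _ [_ [_ [_ [h _]]]]; exact: h. Qed.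

Lemma h1i i : I i -> sqle (A 1) (A i).
Proof. case: hreg => _ [_ [_ [_ [_ [h _]]]]] Hi; by case/andP: (h i Hi). Qed.

Lemma hregb t p s : 2 <= t <= k -> consecutive A t p s -> regular_bip (A p) (A s).
Proof. case: hreg => _ [_ [_ [_ [_ [_ [_ h]]]]]]; exact: h. Qed.

Lemma ac_eq (B : {set T}) x y : antichain B -> x \in B -> y \in B -> (x <= y)%O -> x = y.
Proof.
move=> /forallP H xB yB xy; apply/eqP; apply/negPn/negP => nxy.
by move: (H x); rewrite xB /= => /forallP/(_ y); rewrite yB nxy /= xy.
Qed.

Lemma memI i j x : I i -> I j -> x \in A i -> x \in A j -> i = j.
Proof.
move=> Hi Hj xi xj; apply/eqP/negPn/negP => nij.
by move: (hdisj Hi Hj nij) => /disjoint_setI0/setP/(_ x); rewrite inE xi xj in_set0.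
Qed.

Lemma nonempty i : I i -> exists x, x \in A i.
Proof.
move=> Hi; case: (hmax Hi) => _ c; apply/set0Pn; apply/negP => /eqP e.
by move: c wpos; rewrite e cards0 => <-.
Qed.

Lemma neqA i j : I i -> I j -> i != j -> A i != A j.
Proof.
move=> Hi Hj nij; apply/negP => /eqP e; case: (nonempty Hi) => x xi.
have xj : x \in A j by rewrite -e.
by move/eqP: nij; apply; exact: memI xi xj.
Qed.

Lemma sqle_trans (B C D : {set T}) : sqle B C -> sqle C D -> sqle B D.
Proof.
move=> /subsetP h1 /subsetP h2; apply/subsetP => x /h1; rewrite inE => /existsP [y /andP [yC xy]].
move: (h2 y yC); rewrite inE => /existsP [z /andP [zD yz]].
by rewrite inE; apply/existsP; exists z; rewrite zD (le_trans xy yz).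
Qed.

Lemma sqleP (B C : {set T}) x : sqle B C -> x \in B -> exists2 y, y \in C & (x <= y)%O.
Proof. move=> /subsetP h /h; rewrite inE => /existsP [y /andP [? ?]]; by exists y. Qed.

Lemma antisym i j : I i -> I j -> sqle (A i) (A j) -> sqle (A j) (A i) -> i = j.
Proof.
move=> Hi Hj h1 h2; case: (nonempty Hi) => x xi.
case: (sqleP h1 xi) => y yj xy; case: (sqleP h2 yj) => z zi yz.
have xz : x = z by apply: (ac_eq (proj1 (hmax Hi))) => //; exact: le_trans yz.
subst z; have : x = y by apply: le_anti; rewrite xy yz.
move=> e; subst y; exact: memI xi yj.
Qed.

Lemma lt_irr i : ~ lt i i.
Proof. by rewrite /lt /sqlt eqxx andbF. Qed.

Lemma lt_neq i j : lt i j -> i <> j.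
Proof. by move=> h e; rewrite e in h; exact: lt_irr h. Qed.

Lemma lt_asym i j : I i -> I j -> lt i j -> lt j i -> False.
Proof.
move=> Hi Hj /andP [h1 n1] /andP [h2 _].
by have e := antisym Hi Hj h1 h2; rewrite e eqxx in n1.
Qed.

Lemma ltI_trans i j l : I i -> I j -> I l -> lt i j -> lt j l -> lt i l.
Proof.
move=> Hi Hj Hl h1 h2; apply/andP; split.
  by apply: sqle_trans (proj1 (andP h1)) (proj1 (andP h2)).
apply/negP => /eqP e.
have : lt j i by rewrite /lt e.
by move=> h3; apply: lt_asym h1 h3.
Qed.

Lemma total i j : I i -> I j -> [\/ i = j, lt i j | lt j i].
Proof.
move=> Hi Hj; case: (eqVneq i j) => [e|nij]; first by constructor 1.
have nA := neqA Hi Hj nij.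
case/orP: (htot Hi Hj) => h; [constructor 2 | constructor 3]; apply/andP; split => //.
by rewrite eq_sym.
Qed.

Lemma lt_down i j x : I i -> I j -> lt i j -> x \in A i -> exists2 y, y \in A j & (x < y)%O.
Proof.
move=> Hi Hj /andP [h n] xi; case: (sqleP h xi) => y yj xy; exists y => //.
rewrite lt_neqAle xy andbT; apply/negP => /eqP e; subst y.
have e := memI Hi Hj xi yj; by rewrite e eqxx in n.
Qed.

Lemma lt_norev i j x y : I i -> I j -> lt i j -> x \in A i -> y \in A j -> ~ (y <= x)%O.
Proof.
move=> Hi Hj h xi yj yx; case: (lt_down Hi Hj h xi) => y' y'j xy'.
have e : y = y' by apply: (ac_eq (proj1 (hmax Hj))) => //; exact: le_trans yx (ltW xy').
subst y'; have : x = y by apply: le_anti; rewrite yx (ltW xy').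
move=> e; rewrite -e in yj; have e2 := memI Hi Hj xi yj; rewrite e2 in h; exact: lt_irr h.
Qed.

(* width argument *)
Lemma lt_up i j y : I i -> I j -> lt i j -> y \in A j -> exists2 x, x \in A i & (x < y)%O.
Proof.
move=> Hi Hj h yj.
case: (classic (exists2 x, x \in A i & (x < y)%O)) => // hn; exfalso.
have yni : y \notin A i.
  apply/negP => yi; have e := memI Hi Hj yi yj; rewrite e in h; exact: lt_irr h.
have ac : antichain (y |: A i).
  apply/forallP => x; apply/implyP => /setU1P hx; apply/forallP => z; apply/implyP => /setU1P hz.
  apply/implyP => nxz; apply/negP => xz.
  case: hx => [ex|xi]; case: hz => [ez|zi].
  - by rewrite ex ez eqxx in nxz.
  - subst x; exact: (lt_norev Hi Hj h zi yj xz).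
  - subst z; apply: hn; exists x => //; rewrite lt_neqAle xz andbT //.
  - by move/forallP: (proj1 (hmax Hi)) => /(_ x); rewrite xi /= => /forallP/(_ z); rewrite zi nxz /= xz.
have := @leq_bigmax_cond _ (fun B : {set T} => antichain B) (fun B => #|B|) _ ac.
rewrite -/(width T) hwidth cardsU1 yni (proj2 (hmax Hi)) /=; lia.
Qed.


Lemma upP (B : {set T}) y : reflect (exists2 x, x \in B & (x <= y)%O) (y \in upset B).
Proof.
rewrite inE; apply: (iffP existsP) => [[x /andP [? ?]]|[x ? ?]]; exists x => //; exact/andP.
Qed.
Lemma downP (B : {set T}) y : reflect (exists2 x, x \in B & (y <= x)%O) (y \in downset B).
Proof.
rewrite inE; apply: (iffP existsP) => [[x /andP [? ?]]|[x ? ?]]; exists x => //; exact/andP.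
Qed.
Lemma IntP (N : {set T} * {set T}) y :
  reflect ((exists2 x, x \in N.1 & (x <= y)%O) /\ (exists2 x, x \in N.2 & (y <= x)%O)) (y \in Int N).
Proof.
rewrite /Int inE; apply: (iffP andP) => [[/upP ? /downP ?]|[? ?]]; split => //.
by apply/upP. by apply/downP.
Qed.

Lemma connect_inv (e : rel T) (Q : T -> Prop) x y :
  (forall u v, Q u -> e u v -> Q v) -> connect e x y -> Q x -> Q y.
Proof.
move=> H /connectP [p pth ->]; elim: p x pth => [|z p IH] x //= /andP [exz pth] Qx.
by apply: (IH z pth); exact: H Qx exz.
Qed.

Lemma bip_sym (X Y : {set T}) : ssrbool.symmetric (bip_adj X Y).
Proof. by move=> x y; rewrite /bip_adj orbC. Qed.

Lemma connect_in (X Y : {set T}) x y :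
  connect (bip_adj X Y) x y -> x \in X :|: Y -> y \in X :|: Y.
Proof.
apply: (connect_inv (Q := fun z => z \in X :|: Y)) => u v _.
rewrite /bip_adj inE => /orP [/andP [/andP [_ ->]] _|/andP [/andP [-> _]] _] //.
by rewrite orbT.
Qed.

Lemma node_sub1 p s N : node_of A p s N -> N.1 \subset A p. Proof. by case. Qed.
Lemma node_sub2 p s N : node_of A p s N -> N.2 \subset A s. Proof. by case. Qed.

Section NodeLemmas.
Variables (p s : nat) (N : {set T} * {set T}).
Hypotheses (Hp : I p) (Hs : I s) (hps : lt p s) (hN : node_of A p s N).

Lemma ps_neq : p != s.
Proof. by apply/eqP; apply: lt_neq. Qed.

Lemma ps_disj : [disjoint A p & A s].
Proof. exact: hdisj Hp Hs ps_neq. Qed.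

Lemma notin_ps z : z \in A p -> z \in A s -> False.
Proof.
by move=> zp zs; move: ps_disj => /disjoint_setI0/setP/(_ z); rewrite inE zp zs in_set0.
Qed.


Lemma node_split1 z : z \in A p -> (z \in N.1) = (z \in N.1 :|: N.2).
Proof.
move=> zp; rewrite inE; case: (boolP (z \in N.1)) => //= _.
apply/esym/negP => /(subsetP (node_sub2 hN)) zs; exact: notin_ps zp zs.
Qed.
Lemma node_split2 z : z \in A s -> (z \in N.2) = (z \in N.1 :|: N.2).
Proof.
move=> zs; rewrite inE; case: (boolP (z \in N.1)) => //= z1.
by have := notin_ps (subsetP (node_sub1 hN) _ z1) zs.
Qed.

Lemma node_closed z z' : z \in N.1 :|: N.2 -> bip_adj (A p) (A s) z z' -> z' \in N.1 :|: N.2.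
Proof.
case: hN => _ _ [x0 _ ->]; rewrite !inE => h1 h2.
exact: connect_trans h1 (connect1 h2).
Qed.

Lemma edge12 x y : x \in N.1 -> y \in A s -> (x < y)%O -> y \in N.2.
Proof.
move=> x1 ys xy; rewrite node_split2 //; apply: (node_closed (z := x)); first by rewrite inE x1.
by rewrite /bip_adj (subsetP (node_sub1 hN) _ x1) ys xy.
Qed.
Lemma edge21 x y : y \in N.2 -> x \in A p -> (x < y)%O -> x \in N.1.
Proof.
move=> y2 xp xy; rewrite node_split1 //; apply: (node_closed (z := y)); first by rewrite inE y2 orbT.
by rewrite /bip_adj (subsetP (node_sub2 hN) _ y2) xp xy orbT.
Qed.

Lemma node1_up x : x \in N.1 -> exists2 y, y \in N.2 & (x < y)%O.
Proof.
move=> x1; case: (lt_down Hp Hs hps (subsetP (node_sub1 hN) _ x1)) => y ys xy.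
by exists y => //; exact: edge12 x1 ys xy.
Qed.
Lemma node2_down y : y \in N.2 -> exists2 x, x \in N.1 & (x < y)%O.
Proof.
move=> y2; case: (lt_up Hp Hs hps (subsetP (node_sub2 hN) _ y2)) => x xp xy.
by exists x => //; exact: edge21 y2 xp xy.
Qed.

Lemma node_ne : exists x y, [/\ x \in N.1, y \in N.2 & (x < y)%O].
Proof.
case: hN => _ _ [x0 x0in e].
have x0c : x0 \in N.1 :|: N.2 by rewrite e inE connect0.
move: x0in; rewrite inE => /orP [x0p|x0s].
  have x01 : x0 \in N.1 by rewrite node_split1.
  by case: (node1_up x01) => y ? ?; exists x0, y.
have x02 : x0 \in N.2 by rewrite node_split2.
by case: (node2_down x02) => x ? ?; exists x, x0.
Qed.

Lemma VINT : N.1 :|: N.2 \subset Int N.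
Proof.
apply/subsetP => z; rewrite inE => /orP [z1|z2]; apply/IntP; split.
- by exists z.
- by case: (node1_up z1) => y ? ?; exists y => //; exact: ltW.
- by case: (node2_down z2) => x ? ?; exists x => //; exact: ltW.
- by exists z.
Qed.

Lemma Int_vertex1 z : z \in Int N -> z \in A p -> z \in N.1.
Proof.
move=> /IntP [[x x1 xz] _] zp.
have e : x = z by apply: (ac_eq (proj1 (hmax Hp))) => //; exact: (subsetP (node_sub1 hN)).
by rewrite -e.
Qed.
Lemma Int_vertex2 z : z \in Int N -> z \in A s -> z \in N.2.
Proof.
move=> /IntP [_ [y y2 zy]] zs.
have e : z = y by apply: (ac_eq (proj1 (hmax Hs))) => //; exact: (subsetP (node_sub2 hN)).
by rewrite e.
Qed.

Lemma INTPOS j z : I j -> z \in A j -> z \in Int N -> le p j /\ le j s.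
Proof.
move=> Hj zj /IntP [[x x1 xz] [y y2 zy]]; split.
  case: (total Hp Hj) => [->|h|h]; [by left|by right|exfalso].
  exact: (lt_norev Hj Hp h zj (subsetP (node_sub1 hN) _ x1) xz).
case: (total Hj Hs) => [->|h|h]; [by left|by right|exfalso].
exact: (lt_norev Hs Hj h (subsetP (node_sub2 hN) _ y2) zj zy).
Qed.

End NodeLemmas.

Lemma node_eq p s N N' v : I p -> I s -> lt p s -> node_of A p s N -> node_of A p s N' ->
  v \in N.1 :|: N.2 -> v \in N'.1 :|: N'.2 -> N = N'.
Proof.
move=> Hp Hs hps hN hN' vN vN'.
have eU : N.1 :|: N.2 = N'.1 :|: N'.2.
  move: (hN) (hN') vN vN' => [_ _ [x _ ->]] [_ _ [x' _ ->]]; rewrite !inE => c1 c2.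
  apply/setP => z; rewrite !inE.
  have cs := sym_connect_sym (bip_sym (A p) (A s)).
  apply/idP/idP => h.
    by apply: connect_trans c2 _; apply: connect_trans h; rewrite cs.
  by apply: connect_trans c1 _; apply: connect_trans h; rewrite cs.
case: N hN vN eU => N1 N2 hN vN eU; case: N' hN' vN' eU => N1' N2' hN' vN' eU.
congr pair; apply/setP => z /=.
  case: (boolP (z \in A p)) => zp.
    by rewrite (node_split1 Hp Hs hps hN zp) (node_split1 Hp Hs hps hN' zp) /= eU.
  apply/idP/idP => h; [have := subsetP (node_sub1 hN) _ h | have := subsetP (node_sub1 hN') _ h];
  by rewrite (negbTE zp).
case: (boolP (z \in A s)) => zs.
  by rewrite (node_split2 Hp Hs hps hN zs) (node_split2 Hp Hs hps hN' zs) /= eU.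
apply/idP/idP => h; [have := subsetP (node_sub2 hN) _ h | have := subsetP (node_sub2 hN') _ h];
by rewrite (negbTE zs).
Qed.


Lemma disjI i j z : I i -> I j -> lt i j -> z \in A i -> z \in A j -> False.
Proof. by move=> Hi Hj h zi zj; have e := memI Hi Hj zi zj; rewrite e in h; exact: lt_irr h. Qed.

Lemma cons_I t p s : t <= k -> consecutive A t p s -> I p /\ I s.
Proof. by move=> tk [/andP [? ?] /andP [? ?] _ _]; split; apply/andP; split => //; lia. Qed.
Lemma cons_lt t p s : consecutive A t p s -> lt p s.
Proof. by case. Qed.
Lemma cons_bd t p s : consecutive A t p s -> [/\ 1 <= p, p <= t, 1 <= s & s <= t].
Proof. by case=> /andP [? ?] /andP [? ?] _ _. Qed.
Lemma cons_nb t p s q : consecutive A t p s -> 1 <= q <= t -> lt p q -> lt q s -> False.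
Proof. by case=> _ _ _ h /h; rewrite /lt => /negP H h1 h2; apply: H; rewrite h1 h2. Qed.

Lemma LAM t a b t' c dd : consecutive A t a b -> consecutive A t' c dd ->
  lt c a -> lt a dd -> lt dd b -> False.
Proof.
move=> h1 h2 ca ad db.
case: (cons_bd h1) (cons_bd h2) => a1 at_ b1 bt [c1 ct' d1 dt'].
rename dd into d0.
have : t' < a.
  rewrite ltnNge; apply/negP => le1; apply: (cons_nb h2 _ ca ad); lia.
have : t < d0.
  rewrite ltnNge; apply/negP => le1; apply: (cons_nb h1 _ ad db); lia.
lia.
Qed.

Definition compn (X Y : {set T}) x :=
  ([set z in X | connect (bip_adj X Y) x z], [set z in Y | connect (bip_adj X Y) x z]).

Lemma compn_node p s x : x \in A p :|: A s -> node_of A p s (compn (A p) (A s) x).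
Proof.
move=> xin; split; try by apply/subsetP => z; rewrite inE => /andP [].
exists x => //; apply/setP => z; rewrite !inE.
case: (boolP (connect _ x z)) => c; rewrite ?andbF ?andbT //.
by have := connect_in c xin; rewrite inE.
Qed.

Lemma refA a u b N x : I a -> I u -> I b -> lt a u -> lt u b -> node_of A a b N -> x \in N.1 ->
  forall z, connect (bip_adj (A a) (A u)) x z ->
   (z \in A a -> z \in N.1) /\ (z \in A u -> exists2 y', y' \in N.2 & (z < y')%O).
Proof.
move=> Ia Iu Ib au ub hN x1 z cz.
have ab := ltI_trans Ia Iu Ib au ub.
have xa : x \in A a := subsetP (node_sub1 hN) _ x1.
apply: (connect_inv (Q := fun z => (z \in A a -> z \in N.1) /\
   (z \in A u -> exists2 y', y' \in N.2 & (z < y')%O))) cz _; last first.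
  by split => // xu; exfalso; exact: disjI Ia Iu au xa xu.
move=> u0 v [Q1 Q2]; rewrite /bip_adj => /orP [/andP [/andP [u0a vu] uv]|/andP [/andP [va u0u] vu0]].
  have u01 := Q1 u0a; split => [va|_]; first by exfalso; exact: disjI Ia Iu au va vu.
  case: (lt_down Iu Ib ub vu) => y'' y''b vy''.
  exists y'' => //; apply: (edge12 Ia Ib ab hN u01 y''b); exact: lt_trans uv vy''.
case: (Q2 u0u) => y' y'2 u0y'.
split => [_|vu]; last by exfalso; exact: disjI Ia Iu au va vu.
apply: (edge21 Ia Ib ab hN y'2 va); exact: lt_trans vu0 u0y'.
Qed.

Lemma refB a u b N y : I a -> I u -> I b -> lt a u -> lt u b -> node_of A a b N -> y \in N.2 ->
  forall z, connect (bip_adj (A u) (A b)) y z ->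
   (z \in A b -> z \in N.2) /\ (z \in A u -> exists2 x', x' \in N.1 & (x' < z)%O).
Proof.
move=> Ia Iu Ib au ub hN y2 z cz.
have ab := ltI_trans Ia Iu Ib au ub.
have yb : y \in A b := subsetP (node_sub2 hN) _ y2.
apply: (connect_inv (Q := fun z => (z \in A b -> z \in N.2) /\
   (z \in A u -> exists2 x', x' \in N.1 & (x' < z)%O))) cz _; last first.
  by split => // yu; exfalso; exact: disjI Iu Ib ub yu yb.
move=> u0 v [Q1 Q2]; rewrite /bip_adj => /orP [/andP [/andP [u0u vb] uv]|/andP [/andP [vu u0b] vu0]].
  case: (Q2 u0u) => x' x'1 x'u0.
  split => [_|vu]; last by exfalso; exact: disjI Iu Ib ub vu vb.
  apply: (edge12 Ia Ib ab hN x'1 vb); exact: lt_trans x'u0 uv.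
have u02 := Q1 u0b; split => [vb|_]; first by exfalso; exact: disjI Iu Ib ub vu vb.
case: (lt_up Ia Iu au vu) => x'' x''a x''v.
exists x'' => //; apply: (edge21 Ia Ib ab hN u02 x''a); exact: lt_trans x''v vu0.
Qed.

Lemma childA a u b N x : 2 < u <= k -> consecutive A u.-1 a b -> lt a u -> lt u b ->
  node_of A a b N -> x \in N.1 -> child A k N (compn (A a) (A u) x).
Proof.
move=> hu hc au ub hN x1.
have [Ia Ib] : I a /\ I b by apply: (cons_I _ hc); lia.
have Iu : I u by apply/andP; split; lia.
have ab := ltI_trans Ia Iu Ib au ub.
have xa : x \in A a := subsetP (node_sub1 hN) _ x1.
exists u, a, b; split => //; first by apply/andP; split.
  by left; apply: compn_node; rewrite inE xa.
split => //; apply/properP; split.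
  apply/subsetP => z /IntP [[x' x'1 x'z] [y' y'2 zy']]; apply/IntP; split.
    move: x'1; rewrite inE => /andP [x'a cx'].
    exists x' => //; exact: (proj1 (refA Ia Iu Ib au ub hN x1 cx') x'a).
  move: y'2; rewrite inE => /andP [y'u cy'].
  case: (proj2 (refA Ia Iu Ib au ub hN x1 cy') y'u) => y'' ? ?.
  exists y'' => //; apply: le_trans zy' (ltW _); eassumption.
case: (node_ne Ia Ib ab hN) => x0 [y0 [_ y02 _]].
exists y0; first by apply: (subsetP (VINT Ia Ib ab hN)); rewrite inE y02 orbT.
apply/negP => /IntP [_ [c]]; rewrite inE => /andP [cu _] y0c.
exact: (lt_norev Iu Ib ub cu (subsetP (node_sub2 hN) _ y02) y0c).
Qed.

Lemma childB a u b N y : 2 < u <= k -> consecutive A u.-1 a b -> lt a u -> lt u b ->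
  node_of A a b N -> y \in N.2 -> child A k N (compn (A u) (A b) y).
Proof.
move=> hu hc au ub hN y2.
have [Ia Ib] : I a /\ I b by apply: (cons_I _ hc); lia.
have Iu : I u by apply/andP; split; lia.
have ab := ltI_trans Ia Iu Ib au ub.
have yb : y \in A b := subsetP (node_sub2 hN) _ y2.
exists u, a, b; split => //; first by apply/andP; split.
  by right; apply: compn_node; rewrite inE yb orbT.
split => //; apply/properP; split.
  apply/subsetP => z /IntP [[x' x'1 x'z] [y' y'2 zy']]; apply/IntP; split.
    move: x'1; rewrite inE => /andP [x'u cx'].
    case: (proj2 (refB Ia Iu Ib au ub hN y2 cx') x'u) => x'' ? ?.
    exists x'' => //; apply: le_trans (ltW _) x'z; eassumption.
  move: y'2; rewrite inE => /andP [y'b cy'].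
  exists y' => //; exact: (proj1 (refB Ia Iu Ib au ub hN y2 cy') y'b).
case: (node_ne Ia Ib ab hN) => x0 [y0 [x01 _ _]].
exists x0; first by apply: (subsetP (VINT Ia Ib ab hN)); rewrite inE x01.
apply/negP => /IntP [[c]]; rewrite inE => /andP [cu _] cx0 _.
exact: (lt_norev Ia Iu au (subsetP (node_sub1 hN) _ x01) cu cx0).
Qed.


Lemma master n : forall t a b N t' c dd M v, k - t < n ->
  2 <= t <= k -> consecutive A t a b -> node_of A a b N ->
  2 <= t' <= k -> consecutive A t' c dd -> node_of A c dd M ->
  le a c -> le dd b -> ~ (c = a /\ dd = b) ->
  v \in M.1 :|: M.2 -> v \in Int N -> descendant A k M N.
Proof.
elim: n => [|n IH] t a b N t' c dd M v hn ht hab hN ht' hcd hM hac hdb hne vM vN; first by rewrite ltn0 in hn.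
have [Ia Ib] : I a /\ I b by apply: (cons_I _ hab); case/andP: ht.
have [Ic Id] : I c /\ I dd by apply: (cons_I _ hcd); case/andP: ht'.
have ab := cons_lt hab; have cd := cons_lt hcd.
pose P i := (1 <= i <= k) && lt a i && lt i b.
have hPcd : P c \/ P dd.
  case: hac => [ac|ac].
    subst c; right; rewrite /P Id cd /=; case: hdb => [db|//].
    by subst dd; exfalso; apply: hne.
  left; rewrite /P Ic ac /=; case: hdb => [db|db]; first by rewrite -db.
  exact: ltI_trans Ic Id Ib cd db.
have exP : exists i, P i by case: hPcd => h; eexists; exact: h.
case: (ex_minnP exP) => u /andP [/andP [Iu au] ub] umin.
have [a1 at_ b1 bt] := cons_bd hab.
have [c1 ct' d1 dt'] := cons_bd hcd.
have tu : t < u.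
  rewrite ltnNge; apply/negP => ut; apply: (cons_nb hab _ au ub); clear -Iu ut; lia.
have hu : 2 < u <= k by clear -tu ht Iu; lia.
have c1ab : consecutive A u.-1 a b.
  split => //; try (apply/andP; split; clear -a1 at_ b1 bt tu; lia).
  move=> q hq; apply/negP => /andP [aq qb].
  have : u <= q by apply: umin; rewrite /P; apply/andP; split; [apply/andP; split; [apply/andP; split; clear -hq hu; lia|exact: aq]|exact: qb].
  clear -hq hu; lia.
have c_au : consecutive A u a u.
  split => //; try (apply/andP; split; clear -a1 at_ tu hu; lia).
  move=> q hq; apply/negP => /andP [aq qu].
  have Iq : I q by apply/andP; split; clear -hq hu; lia.
  have : u <= q by apply: umin; rewrite /P Iq; apply/andP; split; [exact: aq|exact: (ltI_trans Iq Iu Ib qu ub)].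
  move=> uq; have e : q = u by clear -uq hq; lia.
  by rewrite e in qu; exact: lt_irr qu.
have c_ub : consecutive A u u b.
  split => //; try (apply/andP; split; clear -b1 bt tu hu; lia).
  move=> q hq; apply/negP => /andP [uq qb].
  have Iq : I q by apply/andP; split; clear -hq hu; lia.
  have : u <= q by apply: umin; rewrite /P Iq; apply/andP; split; [exact: (ltI_trans Ia Iu Iq au uq)|exact: qb].
  move=> uq'; have e : q = u by clear -uq' hq; lia.
  by rewrite e in uq; exact: lt_irr uq.
have hu' : 2 <= u <= k by clear -hu; lia.
have kn : k - u < n by clear -hn tu hu; lia.
case/IntP: (vN) => [[x x1 xv] [y y2 vy]].
have xa : x \in A a := subsetP (node_sub1 hN) _ x1.
have yb : y \in A b := subsetP (node_sub2 hN) _ y2.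
have [j [hj vj]] : exists j, (j = c \/ j = dd) /\ v \in A j.
  move: vM; rewrite inE => /orP [v1|v2].
    by exists c; split; [left | exact: (subsetP (node_sub1 hM))].
  by exists dd; split; [right | exact: (subsetP (node_sub2 hM))].
have Ij : I j by case: hj => ->.
have caseA : le dd u -> descendant A k M N.
  move=> du.
  have ju : le j u.
    case: hj => ->; last exact: du.
    right; case: du => [<-|du]; first exact: cd.
    exact: ltI_trans Ic Id Iu cd du.
  have [c' c'u vc'] : exists2 c', c' \in A u & (v <= c')%O.
    case: ju => [e|ju]; first by exists v; rewrite // -e.
    by case: (lt_down Ij Iu ju vj) => c' ? ?; exists c' => //; exact: ltW.
  have xc' : (x < c')%O.
    rewrite lt_neqAle (le_trans xv vc') andbT; apply/negP => /eqP e.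
    by rewrite e in xa; exact: disjI Ia Iu au xa c'u.
  pose C := compn (A a) (A u) x.
  have hC : node_of A a u C by apply: compn_node; rewrite inE xa.
  have ch : child A k N C by exact: childA hu c1ab au ub hN x1.
  have vC : v \in Int C.
    apply/IntP; split.
      by exists x => //; rewrite /C /compn /= inE xa connect0.
    exists c' => //; rewrite /C /compn /= inE c'u /=; apply: connect1.
    by rewrite /bip_adj xa c'u xc'.
  case: (classic (c = a /\ dd = u)) => [[ec ed]|ne].
    have eM : M = C.
      subst c dd; apply: (node_eq Ia Iu au hM hC vM).
      case: hj => ej; rewrite ej in vj; rewrite inE.
        by rewrite (Int_vertex1 Ia Iu au hC vC vj).
      by rewrite (Int_vertex2 Ia Iu au hC vC vj) orbT.
    by rewrite eM; apply: t_step.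
  apply: t_trans; first exact: (t_step _ _ _ _ ch).
  exact: (IH u a u C t' c dd M v kn hu' c_au hC ht' hcd hM hac du ne vM vC).
have caseB : le u c -> descendant A k M N.
  move=> uc.
  have uj : le u j.
    case: hj => ->; first exact: uc.
    right; case: uc => [->|uc]; first exact: cd.
    exact: ltI_trans Iu Ic Id uc cd.
  have [c' c'u c'v] : exists2 c', c' \in A u & (c' <= v)%O.
    case: uj => [e|uj]; first by exists v; rewrite // e.
    by case: (lt_up Iu Ij uj vj) => c' ? ?; exists c' => //; exact: ltW.
  have c'y : (c' < y)%O.
    rewrite lt_neqAle (le_trans c'v vy) andbT; apply/negP => /eqP e.
    by rewrite e in c'u; exact: disjI Iu Ib ub c'u yb.
  pose C := compn (A u) (A b) y.
  have hC : node_of A u b C by apply: compn_node; rewrite inE yb orbT.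
  have ch : child A k N C by exact: childB hu c1ab au ub hN y2.
  have vC : v \in Int C.
    apply/IntP; split.
      exists c' => //; rewrite /C /compn /= inE c'u /=; apply: connect1.
      by rewrite /bip_adj c'u yb c'y orbT.
    by exists y => //; rewrite /C /compn /= inE yb connect0.
  case: (classic (c = u /\ dd = b)) => [[ec ed]|ne].
    have eM : M = C.
      subst c dd; apply: (node_eq Iu Ib ub hM hC vM).
      case: hj => ej; rewrite ej in vj; rewrite inE.
        by rewrite (Int_vertex1 Iu Ib ub hC vC vj).
      by rewrite (Int_vertex2 Iu Ib ub hC vC vj) orbT.
    by rewrite eM; apply: t_step.
  apply: t_trans; first exact: (t_step _ _ _ _ ch).
  exact: (IH u u b C t' c dd M v kn hu' c_ub hC ht' hcd hM uc hdb ne vM vC).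
case: (total Iu Id) => [e|ud|du]; first by apply: caseA; left.
  case: (total Ic Iu) => [e|cu|uc]; first by apply: caseB; left.
    exfalso.
    have t'u : t' < u.
      rewrite ltnNge; apply/negP => ut; apply: (cons_nb hcd _ cu ud).
      by apply/andP; split; [case/andP: Iu | exact: ut].
    case: hPcd => h.
      by move: (leq_trans (umin _ h) ct'); rewrite leqNgt t'u.
    by move: (leq_trans (umin _ h) dt'); rewrite leqNgt t'u.
  by apply: caseB; right.
by apply: caseA; right.
Qed.


Lemma desc_Int M N : descendant A k M N -> Int M \subset Int N.
Proof.
rewrite /descendant; elim => [x y [t0 [p0 [s0 [_ _ _ _ [_ /proper_sub h]]]]]|x y z _ h1 _ h2] //.
exact: subset_trans h2 h1.
Qed.

Lemma node_unique p s p' s' N : I p -> I s -> lt p s -> node_of A p s N ->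
  I p' -> I s' -> node_of A p' s' N -> p = p' /\ s = s'.
Proof.
move=> Ip Is ps hN Ip' Is' hN'.
case: (node_ne Ip Is ps hN) => x [y [x1 y2 _]]; split.
  exact: memI Ip Ip' (subsetP (node_sub1 hN) _ x1) (subsetP (node_sub1 hN') _ x1).
exact: memI Is Is' (subsetP (node_sub2 hN) _ y2) (subsetP (node_sub2 hN') _ y2).
Qed.

Lemma leaf_nochild q p L M : consecutive A k q p -> node_of A q p L -> child A k L M -> False.
Proof.
move=> hc hL [t0 [p' [s' [ht0 hc' /andP [h1 h2] _ [hL' _]]]]].
have [Iq Ip] := cons_I (leqnn k) hc.
have [Ip' Is'] : I p' /\ I s' by apply: (cons_I _ hc'); clear -ht0; lia.
have [e1 e2] := node_unique Iq Ip (cons_lt hc) hL Ip' Is' hL'.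
rewrite -e1 -e2 in h1 h2.
apply: (cons_nb hc _ h1 h2); clear -ht0; lia.
Qed.

Lemma leaf_nodesc q p L M : consecutive A k q p -> node_of A q p L -> descendant A k M L -> False.
Proof.
move=> hc hL h; case: (clos_trans_t1n _ _ _ _ h) => [M0 ch|M0 M1 ch _]; exact: leaf_nochild hc hL ch.
Qed.

Definition rank i := #|[set j : 'I_k.+1 | (1 <= j) && lt j i]|.

Lemma rank_lt i j : I i -> I j -> lt i j -> rank i < rank j.
Proof.
move=> Ii Ij ij; apply: proper_card; apply/properP; split.
  apply/subsetP => l; rewrite !inE => /andP [l1 li]; rewrite l1 /=.
  have Il : I l by rewrite l1 -ltnS ltn_ord.
  exact: ltI_trans Il Ii Ij li ij.
have ik : i < k.+1 by case/andP: Ii.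
exists (Ordinal ik); rewrite !inE /=; first by case/andP: Ii => -> _.
by apply/negP => /andP [_ /lt_irr].
Qed.

Lemma rank_le i : rank i <= k.+1.
Proof. by rewrite /rank; apply: leq_trans (max_card _) _; rewrite card_ord. Qed.

Lemma pred_ex p : I p -> p != 1 -> exists q, consecutive A k q p.
Proof.
move=> Ip p1.
have l1p : lt 1 p by apply/andP; split; [exact: h1i Ip | apply: (neqA I1 Ip); rewrite eq_sym].
suff : forall n i, I i -> lt i p -> k.+1 - rank i <= n ->
    exists q, [/\ I q, lt q p & forall j, I j -> lt q j -> lt j p -> False].
  move=> /(_ k.+1 1 I1 l1p (leq_subr _ _)) [q [Iq qp qm]]; exists q; split => //.
  move=> j hj; apply/negP => /andP [h1 h2]; exact: qm hj h1 h2.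
elim => [|n IH] i Ii ip hn.
  exists i; split => // j Ij ij jp.
  have := rank_lt Ii Ij ij; have := rank_le j; clear -hn; lia.
case: (classic (exists j, [/\ I j, lt i j & lt j p])) => [[j [Ij ij jp]]|hno].
  apply: (IH j Ij jp); have := rank_lt Ii Ij ij; have := rank_le j; clear -hn; lia.
by exists i; split => // j Ij ij jp; apply: hno; exists j.
Qed.


Section Match.
Variables (X Y : {set T}) (M : {set T * T}).
Hypothesis pm : perfect_matching X Y M.

Lemma pm_edge e : e \in M -> [/\ e.1 \in X, e.2 \in Y & (e.1 < e.2)%O].
Proof.
case/and3P: pm => /forallP h _ _ eM; move: (h e); rewrite eM /= => /and3P [? ? ?]; by split.
Qed.

Lemma pm_u1 x y y' : (x, y) \in M -> (x, y') \in M -> y = y'.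
Proof.
move=> h1 h2; have [xX _ _] := pm_edge h1.
case/and3P: pm => _ /forallP /(_ x) /implyP /(_ xX) /cards1P [e0 he] _.
have : (x, y) \in [set e in M | e.1 == x] by rewrite inE h1 eqxx.
have : (x, y') \in [set e in M | e.1 == x] by rewrite inE h2 eqxx.
by rewrite he !inE => /eqP e1 /eqP e2; move: e1; rewrite -e2 => -[->].
Qed.

Lemma pm_u2 x x' y : (x, y) \in M -> (x', y) \in M -> x = x'.
Proof.
move=> h1 h2; have [_ yY _] := pm_edge h1.
case/and3P: pm => _ _ /forallP /(_ y) /implyP /(_ yY) /cards1P [e0 he].
have : (x, y) \in [set e in M | e.2 == y] by rewrite inE h1 eqxx.
have : (x', y) \in [set e in M | e.2 == y] by rewrite inE h2 eqxx.
by rewrite he !inE => /eqP e1 /eqP e2; move: e1; rewrite -e2 => -[->].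
Qed.

Lemma pm_ex2 y : y \in Y -> exists x, (x, y) \in M.
Proof.
move=> yY; case/and3P: pm => _ _ /forallP /(_ y) /implyP /(_ yY) /cards1P [e0 he].
have : e0 \in [set e in M | e.2 == y] by rewrite he inE.
rewrite inE => /andP [e0M /eqP e2]; exists e0.1; by rewrite -e2 -surjective_pairing.
Qed.

End Match.

Lemma leaf_pm q p L : consecutive A k q p -> node_of A q p L -> exists M, perfect_matching L.1 L.2 M.
Proof.
move=> hc hL.
have [Iq Ip] := cons_I (leqnn k) hc; have qp := cons_lt hc.
case: (node_ne Iq Ip qp hL) => x [y [x1 y2 xy]].
have k2' : 2 <= k <= k by rewrite k2 leqnn.
case: (hregb k2' hc (subsetP (node_sub1 hL) _ x1) (subsetP (node_sub2 hL) _ y2) xy) => M0 [pm0 _].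
exists [set e in M0 | e.1 \in L.1]; apply/and3P; split.
- apply/forallP => e; apply/implyP; rewrite inE => /andP [eM e1].
  have [_ e2 e12] := pm_edge pm0 eM.
  by rewrite e1 e12 (edge12 Iq Ip qp hL e1 e2 e12).
- apply/forallP => x0; apply/implyP => x01.
  have -> : [set e in [set e in M0 | e.1 \in L.1] | e.1 == x0] = [set e in M0 | e.1 == x0].
    apply/setP => e; rewrite !inE; case: (eqVneq e.1 x0) => [->|]; by rewrite ?x01 ?andbT ?andbF.
  case/and3P: pm0 => _ /forallP /(_ x0) /implyP h _; apply: h; exact: (subsetP (node_sub1 hL)).
- apply/forallP => y0; apply/implyP => y02.
  have -> : [set e in [set e in M0 | e.1 \in L.1] | e.2 == y0] = [set e in M0 | e.2 == y0].
    apply/setP => e; rewrite !inE; case: (eqVneq e.2 y0) => [e2|]; rewrite ?andbT ?andbF //.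
    case: (boolP (e \in M0)) => eM //=.
    have [e1 _ e12] := pm_edge pm0 eM.
    by apply: (edge21 Iq Ip qp hL (y := y0)) => //; rewrite -e2.
  case/and3P: pm0 => _ _ /forallP /(_ y0) /implyP h; apply: h; exact: (subsetP (node_sub2 hL)).
Qed.


Section FSec.
Variables (F : {set {set T} * {set T}}) (Mt : {set T} * {set T} -> {set T * T}).
Hypothesis hFnode : forall N, N \in F -> is_node A k N.
Hypothesis hAF : ancestor_free A k F.
Hypothesis hFpm : forall N, N \in F -> perfect_matching N.1 N.2 (Mt N).

Definition leaf N := exists q p, consecutive A k q p /\ node_of A q p N.
Definition inF N := N \in F \/ (leaf N /\ forall N0, N0 \in F -> ~ descendant A k N N0).

Lemma inF_node N : inF N -> exists t p s, [/\ 2 <= t <= k, consecutive A t p s & node_of A p s N].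
Proof.
case=> [/hFnode [t [p [s [? [? ?]]]]]|[[q [p [hc hL]]] _]]; first by exists t, p, s.
by exists k, q, p; split => //; rewrite k2 leqnn.
Qed.

Lemma AF' M N : inF M -> inF N -> ~ descendant A k M N.
Proof.
move=> hM [NF|[[q [p [hc hL]]] _]]; last exact: leaf_nodesc hc hL.
case: hM => [MF|[_ h]]; [exact: hAF | exact: h].
Qed.

Definition Mt' N := if N \in F then Mt N
  else epsilon (inhabits (set0 : {set T * T})) (fun M => perfect_matching N.1 N.2 M).

Lemma pm' N : inF N -> perfect_matching N.1 N.2 (Mt' N).
Proof.
rewrite /Mt'; case: (boolP (N \in F)) => [NF _|NF]; first exact: hFpm.
move=> [NF'|[[q [p [hc hL]]] _]]; first by rewrite NF' in NF.
exact: (epsilon_spec (inhabits (set0 : {set T * T})) (fun M => perfect_matching N.1 N.2 M) (leaf_pm hc hL)).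
Qed.

Lemma S2X N1 N2 x : inF N1 -> inF N2 -> x \in N1.1 -> x \in N2.1 -> N1 = N2.
Proof.
move=> h1 h2 x1 x2.
case: (inF_node h1) => t1 [p1 [s1 [ht1 c1 n1]]].
case: (inF_node h2) => t2 [p2 [s2 [ht2 c2 n2]]].
have [Ip1 Is1] := cons_I (proj2 (andP ht1)) c1.
have [Ip2 Is2] := cons_I (proj2 (andP ht2)) c2.
have e := memI Ip1 Ip2 (subsetP (node_sub1 n1) _ x1) (subsetP (node_sub1 n2) _ x2).
subst p2.
have v1 : x \in N1.1 :|: N1.2 by rewrite inE x1.
have v2 : x \in N2.1 :|: N2.2 by rewrite inE x2.
case: (total Is1 Is2) => [e|l12|l21].
- subst s2; exact: node_eq Ip1 Is1 (cons_lt c1) n1 n2 v1 v2.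
- exfalso; apply: (AF' h1 h2).
  apply: (master (n := (k - t2).+1) (t := t2) (a := p1) (b := s2) (t' := t1) (c := p1) (dd := s1) (v := x)) => //.
  + by left.
  + by right.
  + by case=> _ e; rewrite e in l12; exact: lt_irr l12.
  + exact: (subsetP (VINT Ip1 Is2 (cons_lt c2) n2)).
- exfalso; apply: (AF' h2 h1).
  apply: (master (n := (k - t1).+1) (t := t1) (a := p1) (b := s1) (t' := t2) (c := p1) (dd := s2) (v := x)) => //.
  + by left.
  + by right.
  + by case=> _ e; rewrite e in l21; exact: lt_irr l21.
  + exact: (subsetP (VINT Ip1 Is1 (cons_lt c1) n1)).
Qed.

Lemma S2Y N1 N2 y : inF N1 -> inF N2 -> y \in N1.2 -> y \in N2.2 -> N1 = N2.
Proof.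
move=> h1 h2 y1 y2.
case: (inF_node h1) => t1 [p1 [s1 [ht1 c1 n1]]].
case: (inF_node h2) => t2 [p2 [s2 [ht2 c2 n2]]].
have [Ip1 Is1] := cons_I (proj2 (andP ht1)) c1.
have [Ip2 Is2] := cons_I (proj2 (andP ht2)) c2.
have e := memI Is1 Is2 (subsetP (node_sub2 n1) _ y1) (subsetP (node_sub2 n2) _ y2).
subst s2.
have v1 : y \in N1.1 :|: N1.2 by rewrite inE y1 orbT.
have v2 : y \in N2.1 :|: N2.2 by rewrite inE y2 orbT.
case: (total Ip1 Ip2) => [e|l12|l21].
- subst p2; exact: node_eq Ip1 Is1 (cons_lt c1) n1 n2 v1 v2.
- exfalso; apply: (AF' h2 h1).
  apply: (master (n := (k - t1).+1) (t := t1) (a := p1) (b := s1) (t' := t2) (c := p2) (dd := s1) (v := y)) => //.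
  + by right.
  + by left.
  + by case=> e _; rewrite e in l12; exact: lt_irr l12.
  + exact: (subsetP (VINT Ip1 Is1 (cons_lt c1) n1)).
- exfalso; apply: (AF' h1 h2).
  apply: (master (n := (k - t2).+1) (t := t2) (a := p2) (b := s1) (t' := t1) (c := p1) (dd := s1) (v := y)) => //.
  + by right.
  + by left.
  + by case=> e _; rewrite e in l21; exact: lt_irr l21.
  + exact: (subsetP (VINT Ip2 Is1 (cons_lt c2) n2)).
Qed.


Lemma S1 N3 y : inF N3 -> y \in N3.1 -> y \notin A 1 -> exists N', inF N' /\ y \in N'.2.
Proof.
move=> h3 y1 yn1.
case: (inF_node h3) => t3 [p [r [ht3 c3 n3]]].
have [Ip Ir] := cons_I (proj2 (andP ht3)) c3.
have yp : y \in A p := subsetP (node_sub1 n3) _ y1.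
have p1 : p != 1 by apply/negP => /eqP e; rewrite -e yp in yn1.
case: (pred_ex Ip p1) => q hq.
have [Iq _] := cons_I (leqnn k) hq; have qp := cons_lt hq.
case: (lt_up Iq Ip qp yp) => x'' x''q x''y.
pose L := compn (A q) (A p) y.
have hL : node_of A q p L by apply: compn_node; rewrite inE yp orbT.
have yL : y \in L.2 by rewrite /L /compn /= inE yp connect0.
have xL : x'' \in L.1.
  rewrite /L /compn /= inE x''q /=; apply: connect1.
  by rewrite /bip_adj x''q yp x''y orbT.
case: (classic (exists N0, N0 \in F /\ descendant A k L N0)) => [[N [NF dLN]]|hno]; last first.
  exists L; split => //; right; split; first by exists q, p.
  by move=> N0 N0F d0; apply: hno; exists N0.
have sI := desc_Int dLN.
case: (hFnode NF) => t [a [b [ht [hab hN]]]].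
have [Ia Ib] := cons_I (proj2 (andP ht)) hab; have ab := cons_lt hab.
have yI : y \in Int N.
  apply: (subsetP sI); apply: (subsetP (VINT Iq Ip qp hL)); by rewrite inE yL orbT.
have xI : x'' \in Int N.
  apply: (subsetP sI); apply: (subsetP (VINT Iq Ip qp hL)); by rewrite inE xL.
have [ap pb] := INTPOS Ia Ib ab hN Ip yp yI.
have [aq _] := INTPOS Ia Ib ab hN Iq x''q xI.
have lap : lt a p by case: aq => [->//|aq]; exact: ltI_trans Ia Iq Ip aq qp.
case: pb => [e|lpb].
  exists N; split; first by left.
  rewrite e in yp. have := @Int_vertex2 a b N Ia Ib ab hN y yI yp. exact.
exfalso.
have rb : le r b.
  case: (total Ir Ib) => [->|h|h]; [by left|by right|].
  by exfalso; apply: (LAM c3 hab lap lpb h).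
apply: (AF' h3 (or_introl NF)).
apply: (master (n := (k - t).+1) (t := t) (a := a) (b := b) (t' := t3) (c := p) (dd := r) (v := y)) => //.

- by case=> e _; rewrite e in lap; exact: lt_irr lap.
- by rewrite inE y1.
Qed.

Definition Pup x y := (exists N, inF N /\ (x, y) \in Mt' N) \/
  ((forall y' N, inF N -> (x, y') \notin Mt' N) /\ y = x).

Definition up x := epsilon (inhabits x) (Pup x).

Lemma up_spec x : Pup x (up x).
Proof.
apply: epsilon_spec.
case: (classic (exists y N, inF N /\ (x, y) \in Mt' N)) => [[y [N h]]|h].
  by exists y; left; exists N.
exists x; right; split => // y' N hN; apply/negP => hin; apply: h; by exists y', N.
Qed.

Lemma U1 N x y : inF N -> (x, y) \in Mt' N -> up x = y.
Proof.
move=> hN hxy; case: (up_spec x) => [[N' [hN' h']]|[h _]]; last by move: (h y N hN); rewrite hxy.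
have [x1 _ _] := pm_edge (pm' hN) hxy.
have [x1' _ _] := pm_edge (pm' hN') h'.
have e := S2X hN hN' x1 x1'; subst N'.
have := @pm_u1 _ _ _ (pm' hN) x (up x) y h' hxy. exact.
Qed.

Lemma U2 x : (x <= up x)%O.
Proof.
case: (up_spec x) => [[N [hN h]]|[_ ->]] //.
by have [_ _ /ltW] := pm_edge (pm' hN) h.
Qed.

Lemma up_inj u v : up u = up v -> u = v \/ (u = up v /\ up u = u) \/ (v = up u /\ up v = v).
Proof.
move=> e.
case: (up_spec u) => [[N [hN h]]|[_ eu]]; case: (up_spec v) => [[N' [hN' h']]|[_ ev]].
- left; rewrite -e in h'.
  have [_ y2 _] := pm_edge (pm' hN) h.
  have [_ y2' _] := pm_edge (pm' hN') h'.
  have e2 := S2Y hN hN' y2 y2'; subst N'.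
  have := @pm_u2 _ _ _ (pm' hN) u v (up u) h h'. exact.
- by right; right; split => //; rewrite -ev e.
- by right; left; split => //; rewrite -eu -e.
- by left; rewrite -eu -ev.
Qed.

Lemma iter_ge n a : (a <= iter n up a)%O.
Proof. elim: n => [//|n IH] /=; exact: le_trans IH (U2 _). Qed.

Lemma iter_mono m n a : m <= n -> (iter m up a <= iter n up a)%O.
Proof.
move=> mn; rewrite -(subnK mn); elim: (n - m) => [//|j IH].
by rewrite addSn /=; exact: le_trans IH (U2 _).
Qed.

Lemma orb_disj a a' i j : a \in A 1 -> a' \in A 1 -> iter i up a = iter j up a' -> a = a'.
Proof.
move=> a1 a1'.
have ac := proj1 (hmax I1).
move: {2}(i + j) (leqnn (i + j)) => n; elim: n i j => [|n IH] i j hij.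
  have [-> ->] : i = 0 /\ j = 0 by clear -hij; lia.
  by [].
case: i hij => [|i] hij.
  move=> /= e; apply/esym; apply: (ac_eq ac a1' a1); rewrite e; exact: iter_ge.
case: j hij => [|j] hij.
  move=> /= e; apply: (ac_eq ac a1 a1'); rewrite -e; exact: (iter_ge i.+1 a).
rewrite !iterS => /up_inj [e|[[e _]|[e _]]].
- apply: (IH i j) => //; clear -hij; lia.
- apply: (IH i j.+1) => //; clear -hij; lia.
- apply: (IH i.+1 j) => //; clear -hij; lia.
Qed.

Definition Fset' y := exists N, inF N /\ y \in N.1 :|: N.2.

Lemma predF y : Fset' y -> y \notin A 1 -> exists N' x, inF N' /\ (x, y) \in Mt' N'.
Proof.
move=> [N [hN yN]] yn1.
have [N' [hN' y2']] : exists N', inF N' /\ y \in N'.2.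
  move: yN; rewrite inE => /orP [y1'|y2]; first exact: S1 hN y1' yn1.
  by exists N.
case: (pm_ex2 (pm' hN') y2') => x hx; by exists N', x.
Qed.

Lemma coverF y : Fset' y -> exists2 a, a \in A 1 & exists n, iter n up a = y.
Proof.
move: {2}#|[set z | (z < y)%O]| (leqnn #|[set z | (z < y)%O]|) => n.
elim: n y => [|n IH] y hr hy;
  (case: (boolP (y \in A 1)) => [y1|yn1]; first by exists y => //; exists 0);
  case: (predF hy yn1) => N' [x [hN' hx]];
  have [x1 _ xy] := pm_edge (pm' hN') hx.
  have : x \in [set z | (z < y)%O] by rewrite inE.
  by move: hr; rewrite leqn0 => /eqP/cards0_eq ->; rewrite inE.
have hrx : #|[set z | (z < x)%O]| <= n.
  rewrite -ltnS; apply: leq_trans hr; apply: proper_card; apply/properP; split.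
    by apply/subsetP => z; rewrite !inE => zx; exact: lt_trans zx xy.
  by exists x; rewrite !inE ?ltxx.
case: (IH x hrx) => [|a a1 [m hm]]; first by exists N'; split => //; rewrite inE x1.
exists a => //; exists m.+1; rewrite iterS hm; exact: U1 hN' hx.
Qed.

End FSec.

End Main.

Unset Implicit Arguments.

Theorem proposition11 (d : Order.disp_t) (T : finPOrderType d) (w k : nat)
  (A : nat -> {set T}) (F : {set {set T} * {set T}})
  (Mt : {set T} * {set T} -> {set T * T}) :
  width T = w ->
  regular_poset w k A ->
  (forall N, N \in F -> is_node A k N) ->
  ancestor_free A k F ->
  (forall N, N \in F -> perfect_matching N.1 N.2 (Mt N)) ->
  exists ch : 'I_w -> {set T},
    [/\ (forall i j, i != j -> [disjoint ch i & ch j]),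
        \bigcup_i ch i = \bigcup_(N in F) (N.1 :|: N.2),
        (forall i, chain (ch i)) &
        (forall N e, N \in F -> e \in Mt N ->
           exists i, (e.1 \in ch i) && (e.2 \in ch i))].
Proof.
move=> hw hreg hFnode hAF hFpm.
case: (posnP w) => [w0|wpos].
  have noT : forall x : T, False.
    move=> x; case: hreg => _ [hm [_ [hc _]]]; case: (hc x) => i Ii xi.
    move: (hm i Ii) => /andP [_ /eqP]; rewrite w0 => /cards0_eq e.
    by rewrite e inE in xi.
  exists (fun _ => set0); split.
  - by move=> [i hi]; exfalso; rewrite w0 in hi.
  - by apply/setP => x; exfalso; exact: noT x.
  - by move=> [i hi]; exfalso; rewrite w0 in hi.
  - by move=> N e _ _; exfalso; exact: noT e.1.
set up' := up k A F Mt.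
have hA1 : #|A 1| = w := proj2 (hmax hw hreg wpos (I1 hw hreg wpos)).
pose a_ (i : 'I_w) : T := enum_val (cast_ord (esym hA1) i).
have a_in i : a_ i \in A 1 by rewrite /a_; exact: enum_valP.
have a_inj i j : a_ i = a_ j -> i = j.
  by move=> /enum_val_inj /cast_ord_inj.
have a_surj a : a \in A 1 -> exists i, a_ i = a.
  move=> a1; exists (cast_ord hA1 (enum_rank_in a1 a)).
  by rewrite /a_ cast_ordK enum_rankK_in.
pose Fs := \bigcup_(N in F) (N.1 :|: N.2).
pose orbb a y := if excluded_middle_informative (exists n, iter n up' a = y) then true else false.
have orbbP a y : reflect (exists n, iter n up' a = y) (orbb a y).
  rewrite /orbb; case: excluded_middle_informative => h; by constructor.
pose ch i := [set y in Fs | orbb (a_ i) y].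
have FF' N : N \in F -> inF k A F N by left.
have Fs' y : y \in Fs -> Fset' k A F y.
  by move=> /bigcupP [N NF yN]; exists N; split => //; exact: FF'.
exists ch; split.
- move=> i j nij; rewrite -setI_eq0; apply/eqP/setP => y; rewrite !inE.
  apply/negbTE/negP => /andP [/andP [_ /orbbP [n1 h1]] /andP [_ /orbbP [n2 h2]]].
  move/eqP: nij; apply; apply: a_inj.
  apply: (@orb_disj _ _ _ _ _ hw hreg wpos _ _ hFnode hAF hFpm _ _ n1 n2 (a_in i) (a_in j)); by rewrite h1 h2.
- apply/setP => y; apply/bigcupP/idP => [[i _]|yF]; first by rewrite inE => /andP [].
  case: (coverF hw hreg wpos hFnode hAF hFpm (Fs' y yF)) => a a1 [n hn].
  case: (a_surj a a1) => i ai; exists i => //; rewrite inE yF; apply/orbbP; exists n; by rewrite ai.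
- move=> i; apply/forallP => x; apply/implyP; rewrite inE => /andP [_ /orbbP [n1 <-]].
  apply/forallP => z; apply/implyP; rewrite inE => /andP [_ /orbbP [n2 <-]].
  case: (leqP n1 n2) => h.
    by rewrite (iter_mono hw hreg wpos hFnode hAF hFpm _ h).
  by rewrite (iter_mono hw hreg wpos hFnode hAF hFpm _ (ltnW h)) orbT.
- move=> N e NF eM.
  have [e1 e2 _] := pm_edge hw hreg wpos (hFpm N NF) eM.
  have e1F : e.1 \in Fs by apply/bigcupP; exists N => //; rewrite inE e1.
  have e2F : e.2 \in Fs by apply/bigcupP; exists N => //; rewrite inE e2 orbT.
  case: (coverF hw hreg wpos hFnode hAF hFpm (Fs' _ e1F)) => a a1 [n hn].
  case: (a_surj a a1) => i ai; exists i; rewrite !inE e1F e2F /=.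
  have eM' : (e.1, e.2) \in Mt' F Mt N by rewrite /Mt' NF -surjective_pairing.
  have hup := U1 hw hreg wpos hFnode hAF hFpm (FF' N NF) eM'.
  apply/andP; split; apply/orbbP; [exists n | exists n.+1]; rewrite ai //.
  by rewrite iterS hn.
Qed.
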